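(* Let $\Gamma=(V,E)$ be a Veldkamp $n$-gon ($n\ge 2$) and suppose that the local opposition relation $\equiv_v$ is trivial for some $v\in V$. Then $\equiv_w$ is trivial for every $w\in V$ with ${\rm dist}(v,w)$ even. If moreover $n$ is odd, then $\equiv_w$ is trivial for all $w\in V$.
   Context: A graph is a pair $(V,E)$ with $E$ a set of $2$-element subsets of $V$; $\Gamma_v$ is the set of neighbors of $v$. An $s$-path is a sequence $(x_0,\dots,x_s)$ of vertices with consecutive vertices adjacent and $x_{i-2}\ne x_i$ for $i\in[2,s]$; ${\rm dist}$ is graph distance. A closed $s$-path is an $s$-path with $s\ge3$ whose first and last vertices coincide; an $s$-circuit is the subgraph determined by a closed $s$-path. An opposition relation on a set $X$ is a symmetric anti-reflexive relation; it is trivial if any two distinct elements are related; it is $k$-plump if for every $S\subseteq X$ with $|S|\le k$ some element of $X$ is related to all elements of $S$. A Veldkamp graph is a graph with a $2$-plump opposition relation $\equiv_v$ on $\Gamma_v$ for each vertex $v$. A path $(v_0,\dots,v_s)$ is straight if $v_{i-1}\equiv_{v_i}v_{i+1}$ for all $i\in[1,s-1]$; a circuit is straight if every path in it is straight. A Veldkamp $n$-gon ($n\ge2$) is a Veldkamp graph satisfying (VP1) connected and bipartite; (VP2) for each $k\in[1,n-1]$ each straight $k$-path is the unique straight path between its endpoints of length at most $k$; (VP3) every straight $(n+1)$-path lies in a straight $2n$-circuit. *)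

(* Defs.v *)
From Stdlib Require Import Arith List Lia.
Import ListNotations.

Section Defs.
Variable V : Type.

Definition is_graph (adj : V -> V -> Prop) : Prop :=
  (forall x y, adj x y -> adj y x) /\ (forall x, ~ adj x x).

Definition nbhd (adj : V -> V -> Prop) (v : V) : V -> Prop := fun w => adj v w.

Definition opposition_on (X : V -> Prop) (R : V -> V -> Prop) : Prop :=
  (forall x y, R x y -> X x /\ X y) /\
  (forall x y, R x y -> R y x) /\
  (forall x, ~ R x x).

Definition trivial_opp (X : V -> Prop) (R : V -> V -> Prop) : Prop :=
  forall x y, X x -> X y -> x <> y -> R x y.

(* k-plump: every subset S of X with |S| <= k (given by an enumerating list
   of length <= k) has an element of X related to all elements of S. *)
Definition plump (k : nat) (X : V -> Prop) (R : V -> V -> Prop) : Prop :=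
  forall S : list V, (forall x, In x S -> X x) -> length S <= k ->
    exists y, X y /\ forall x, In x S -> R y x.

(* Veldkamp graph: opp v is the local opposition relation on Gamma_v. *)
Definition veldkamp_graph (adj : V -> V -> Prop) (opp : V -> V -> V -> Prop) : Prop :=
  is_graph adj /\
  forall v, opposition_on (nbhd adj v) (opp v) /\ plump 2 (nbhd adj v) (opp v).

(* An s-path (x_0, ..., x_s), given as x : nat -> V (values beyond s irrelevant). *)
Definition is_path (adj : V -> V -> Prop) (s : nat) (x : nat -> V) : Prop :=
  (forall i, i < s -> adj (x i) (x (S i))) /\
  (forall i, i + 2 <= s -> x i <> x (i + 2)).

Definition straight_cond (opp : V -> V -> V -> Prop) (s : nat) (x : nat -> V) : Prop :=
  forall i, i + 2 <= s -> opp (x (S i)) (x i) (x (i + 2)).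

Definition straight_path adj opp s x : Prop := is_path adj s x /\ straight_cond opp s x.

Definition walk (adj : V -> V -> Prop) (k : nat) (w : nat -> V) : Prop :=
  forall i, i < k -> adj (w i) (w (S i)).

Definition has_walk (adj : V -> V -> Prop) (a b : V) (k : nat) : Prop :=
  exists w, w 0 = a /\ w k = b /\ walk adj k w.

Definition is_dist (adj : V -> V -> Prop) (a b : V) (d : nat) : Prop :=
  has_walk adj a b d /\ forall k, k < d -> ~ has_walk adj a b k.

Definition connected (adj : V -> V -> Prop) : Prop :=
  forall a b, exists k, has_walk adj a b k.

Definition bipartite (adj : V -> V -> Prop) : Prop :=
  exists c : V -> bool, forall x y, adj x y -> c x <> c y.

Definition closed_path adj (s : nat) (x : nat -> V) : Prop :=
  is_path adj s x /\ 3 <= s /\ x 0 = x s.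

Definition circ_vert (s : nat) (x : nat -> V) : V -> Prop :=
  fun y => exists i, i <= s /\ y = x i.

Definition circ_edge (s : nat) (x : nat -> V) : V -> V -> Prop :=
  fun a b => exists i, i < s /\
    ((a = x i /\ b = x (S i)) \/ (a = x (S i) /\ b = x i)).

Definition lies_in (s : nat) (x : nat -> V) (k : nat) (y : nat -> V) : Prop :=
  (forall j, j <= k -> circ_vert s x (y j)) /\
  (forall j, j < k -> circ_edge s x (y j) (y (S j))).

Definition path_in_circuit adj s x k y : Prop := is_path adj k y /\ lies_in s x k y.

Definition straight_circuit adj opp (s : nat) (x : nat -> V) : Prop :=
  forall k y, path_in_circuit adj s x k y -> straight_cond opp k y.

Definition VP2 adj opp (n : nat) : Prop :=
  forall k, 1 <= k <= n - 1 ->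
  forall x, straight_path adj opp k x ->
  forall m y, m <= k -> straight_path adj opp m y -> y 0 = x 0 -> y m = x k ->
    m = k /\ forall i, i <= k -> y i = x i.

Definition VP3 adj opp (n : nat) : Prop :=
  forall x, straight_path adj opp (n + 1) x ->
  exists c, closed_path adj (2 * n) c /\ straight_circuit adj opp (2 * n) c /\
            lies_in (2 * n) c (n + 1) x.

Definition veldkamp_ngon adj opp (n : nat) : Prop :=
  2 <= n /\ veldkamp_graph adj opp /\
  (connected adj /\ bipartite adj) /\ VP2 adj opp n /\ VP3 adj opp n.

End Defs.

Arguments nbhd {V}. Arguments trivial_opp {V}. Arguments veldkamp_ngon {V}.
Arguments is_dist {V}.

(* Main.v *)
Require Import Defs.
From Stdlib Require Import Arith List Lia.
Import ListNotations.

Local Arguments is_graph {V}. Local Arguments opposition_on {V}. Local Arguments plump {V}.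
Local Arguments veldkamp_graph {V}. Local Arguments is_path {V}. Local Arguments straight_cond {V}.
Local Arguments straight_path {V}. Local Arguments walk {V}. Local Arguments has_walk {V}.
Local Arguments connected {V}. Local Arguments bipartite {V}. Local Arguments closed_path {V}.
Local Arguments circ_vert {V}. Local Arguments circ_edge {V}. Local Arguments lies_in {V}.
Local Arguments path_in_circuit {V}. Local Arguments straight_circuit {V}. Local Arguments VP2 {V}.
Local Arguments VP3 {V}.

Section Main.
Variable V : Type.
Variable adj : V -> V -> Prop.
Variable opp : V -> V -> V -> Prop.
Variable n : nat.
Hypothesis Hn : 2 <= n.
Hypothesis Hsym : forall x y, adj x y -> adj y x.
Hypothesis Hirr : forall x, ~ adj x x.
Hypothesis Hopp : forall v, opposition_on (nbhd adj v) (opp v).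
Hypothesis Hplump : forall v, plump 2 (nbhd adj v) (opp v).
Hypothesis HVP2 : VP2 adj opp n.
Hypothesis HVP3 : VP3 adj opp n.

Lemma opp_sym v x y : opp v x y -> opp v y x.
Proof. destruct (Hopp v) as [_ [H _]]. apply H. Qed.
Lemma opp_irr v x : ~ opp v x x.
Proof. destruct (Hopp v) as [_ [_ H]]. apply H. Qed.
Lemma opp_adj v x y : opp v x y -> adj v x /\ adj v y.
Proof. destruct (Hopp v) as [H _]. apply H. Qed.

Lemma straight_rev k x : straight_path adj opp k x ->
  straight_path adj opp k (fun i => x (k - i)).
Proof.
  intros [[Ha Hb] Hc]. split; [split|].
  - intros i Hi. apply Hsym. replace (k - i) with (S (k - S i)) by lia. apply Ha. lia.
  - intros i Hi. intro E. apply (Hb (k - (i+2))). lia.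
    replace (k - (i+2) + 2) with (k - i) by lia. auto.
  - intros i Hi. apply opp_sym.
    replace (k - S i) with (S (k - (i+2))) by lia.
    replace (k - i) with (k - (i+2) + 2) by lia.
    apply Hc. lia.
Qed.

Lemma straight_shift k a x : a <= k -> straight_path adj opp k x ->
  straight_path adj opp (k - a) (fun i => x (a + i)).
Proof.
  intros Hak [[Ha Hb] Hc]. split; [split|].
  - intros i Hi. replace (a + S i) with (S (a + i)) by lia. apply Ha. lia.
  - intros i Hi. replace (a + (i+2)) with (a + i + 2) by lia. apply Hb. lia.
  - intros i Hi. replace (a + S i) with (S (a + i)) by lia.
    replace (a + (i+2)) with (a + i + 2) by lia. apply Hc. lia.
Qed.

Lemma straight_le k m x : m <= k -> straight_path adj opp k x -> straight_path adj opp m x.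
Proof.
  intros Hm [[Ha Hb] Hc]. split; [split|]; intros i Hi; [apply Ha|apply Hb|apply Hc]; lia.
Qed.

Lemma straight_ext k x y : (forall i, i <= k -> x i = y i) ->
  straight_path adj opp k x -> straight_path adj opp k y.
Proof.
  intros E [[Ha Hb] Hc]. split; [split|].
  - intros i Hi. rewrite <- !E by lia. auto.
  - intros i Hi. rewrite <- !E by lia. auto.
  - intros i Hi. rewrite <- !E by lia. auto.
Qed.

Lemma no_short_loop m x : 1 <= m <= n -> straight_path adj opp m x -> x 0 = x m -> False.
Proof.
  intros Hm Hx E.
  destruct (Nat.eq_dec m n) as [->|Hne].
  - assert (Hx' : straight_path adj opp (n-1) x) by (apply (straight_le n); [lia|auto]).
    set (y := fun i => if Nat.eqb i 0 then x 0 else x (n-1)).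
    assert (Hy : straight_path adj opp 1 y).
    { split; [split|].
      - intros i Hi. assert (i = 0) by lia. subst. unfold y; simpl.
        destruct Hx as [[Ha _] _]. rewrite E. apply Hsym.
        replace n with (S (n-1)) at 2 by lia. apply Ha. lia.
      - intros i Hi; lia.
      - intros i Hi; lia. }
    destruct (HVP2 (n-1) ltac:(lia) x Hx' 1 y ltac:(lia) Hy eq_refl eq_refl) as [H1 _].
    assert (n = 2) by lia. subst n.
    destruct Hx as [[_ Hb] _]. apply (Hb 0); auto.
  - set (y := fun _ : nat => x 0).
    assert (Hy : straight_path adj opp 0 y).
    { split; [split|]; intros i Hi; lia. }
    destruct (HVP2 m ltac:(lia) x Hx 0 y ltac:(lia) Hy eq_refl E) as [H1 _]. lia.
Qed.


Lemma window_raw (c : nat -> V) a k : closed_path adj (2*n) c -> straight_circuit adj opp (2*n) c ->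
  a + k <= 2*n -> straight_path adj opp k (fun i => c (a + i)).
Proof.
  intros [[Ha Hb] [H3 E]] Hs Hk.
  assert (Hp : is_path adj k (fun i => c (a + i))).
  { split.
    - intros i Hi. replace (a + S i) with (S (a+i)) by lia. apply Ha. lia.
    - intros i Hi. replace (a + (i+2)) with (a+i+2) by lia. apply Hb. lia. }
  split; auto. apply Hs. split; auto. split.
  - intros j Hj. exists (a+j). split; [lia|auto].
  - intros j Hj. exists (a+j). split; [lia|]. left. split; [auto|f_equal; lia].
Qed.

Lemma lies_ext (c d : nat -> V) k y : (forall i, i <= 2*n -> c i = d i) ->
  lies_in (2*n) c k y -> lies_in (2*n) d k y.
Proof.
  intros E [H1 H2]. split.
  - intros j Hj. destruct (H1 j Hj) as [i [Hi Ei]]. exists i. rewrite <- E by lia. auto.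
  - intros j Hj. destruct (H2 j Hj) as [i [Hi Ei]]. exists i. rewrite <- !E by lia. auto.
Qed.

Lemma lies_rev (c : nat -> V) k y : lies_in (2*n) c k y -> lies_in (2*n) (fun i => c (2*n - i)) k y.
Proof.
  intros [H1 H2]. split.
  - intros j Hj. destruct (H1 j Hj) as [i [Hi Ei]]. exists (2*n - i). split; [lia|].
    rewrite Ei. f_equal. lia.
  - intros j Hj. destruct (H2 j Hj) as [i [Hi Ei]]. exists (2*n - S i). split; [lia|].
    replace (2*n - (2*n - S i)) with (S i) by lia.
    replace (2*n - S (2*n - S i)) with i by lia. tauto.
Qed.

Lemma rev_closed (c : nat -> V) : closed_path adj (2*n) c -> closed_path adj (2*n) (fun i => c (2*n - i)).
Proof.
  intros [[Ha Hb] [H3 E]]. split; [split|split]; auto.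
  - intros i Hi. apply Hsym. replace (2*n - i) with (S (2*n - S i)) by lia. apply Ha. lia.
  - intros i Hi Ei. apply (Hb (2*n - (i+2))). lia.
    replace (2*n - (i+2) + 2) with (2*n - i) by lia. auto.
  - simpl. rewrite Nat.sub_diag, Nat.sub_0_r. auto.
Qed.

Lemma rev_sc (c : nat -> V) : straight_circuit adj opp (2*n) c ->
  straight_circuit adj opp (2*n) (fun i => c (2*n - i)).
Proof.
  intros Hs k y [Hp Hl]. apply Hs. split; auto.
  apply lies_rev in Hl. eapply lies_ext; [|exact Hl].
  intros i Hi. simpl. f_equal. lia.
Qed.

Lemma wrap (c : nat -> V) : closed_path adj (2*n) c -> straight_circuit adj opp (2*n) c ->
  c 1 <> c (2*n - 1).
Proof.
  intros Hc Hs E.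
  pose proof (window_raw c 1 (n-1) Hc Hs ltac:(lia)) as Hx.
  pose proof (window_raw _ 1 (n-1) (rev_closed c Hc) (rev_sc c Hs) ltac:(lia)) as Hy.
  simpl in Hy.
  destruct (HVP2 (n-1) ltac:(lia) _ Hx (n-1) _ ltac:(lia) Hy) as [_ Heq].
  - simpl. replace (2*n - (1+0)) with (2*n-1) by lia. symmetry. exact E.
  - simpl. f_equal. lia.
  - specialize (Heq (n-2) ltac:(lia)). simpl in Heq.
    destruct Hc as [[_ Hb] _]. apply (Hb (n-1)). lia.
    replace (n-1+2) with (n + (n + 0) - S (n - 2)) by lia. rewrite Heq. f_equal. lia.
Qed.

Definition cc (c : nat -> V) i := c (i mod (2*n)).

Lemma Nnz : 2*n <> 0. Proof. lia. Qed.

Lemma cc_le c i : closed_path adj (2*n) c -> i <= 2*n -> cc c i = c i.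
Proof.
  intros [_ [_ E]] Hi. unfold cc. destruct (Nat.eq_dec i (2*n)) as [->|H].
  - rewrite Nat.Div0.mod_same. auto.
  - rewrite Nat.mod_small by lia. auto.
Qed.

Lemma cc_shift c i j m : i mod (2*n) = j mod (2*n) -> cc c (i+m) = cc c (j+m).
Proof.
  intros E. unfold cc. rewrite <- (Nat.Div0.add_mod_idemp_l i), <- (Nat.Div0.add_mod_idemp_l j), E.
  auto.
Qed.

Lemma cc_mod c i : cc c (i mod (2*n)) = cc c i.
Proof. unfold cc. rewrite Nat.Div0.mod_mod. auto. Qed.

Lemma cc_per c i : cc c (i + 2*n) = cc c i.
Proof. unfold cc. replace (i + 2*n) with (i + 1 * (2*n)) by lia. rewrite Nat.Div0.mod_add. auto. Qed.

Lemma mod_lt i : i mod (2*n) < 2*n.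
Proof. apply Nat.mod_upper_bound. lia. Qed.

Lemma cc_S c i : closed_path adj (2*n) c -> cc c (S i) = c (S (i mod (2*n))).
Proof.
  intros Hc. rewrite <- cc_le with (c:=c) by (auto; pose proof (mod_lt i); lia).
  replace (S i) with (i + 1) by lia. replace (S (i mod (2*n))) with (i mod (2*n) + 1) by lia.
  apply cc_shift. rewrite Nat.Div0.mod_mod. auto.
Qed.

Lemma cc_adj c i : closed_path adj (2*n) c -> adj (cc c i) (cc c (S i)).
Proof.
  intros Hc. rewrite cc_S by auto. unfold cc at 1. destruct Hc as [[Ha _] _]. apply Ha. apply mod_lt.
Qed.

Lemma cc_nb c i : closed_path adj (2*n) c -> straight_circuit adj opp (2*n) c ->
  cc c i <> cc c (i+2).
Proof.
  intros Hc Hs. rewrite <- (cc_mod c i). rewrite (cc_shift c i (i mod (2*n)) 2)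
    by (rewrite Nat.Div0.mod_mod; auto).
  pose proof (mod_lt i). set (j := i mod (2*n)) in *.
  destruct (Nat.eq_dec j (2*n-1)) as [E|E].
  - rewrite E. replace (2*n-1+2) with (1 + 2*n) by lia. rewrite cc_per.
    rewrite !cc_le by (auto; lia). intro F. apply (wrap c Hc Hs). auto.
  - rewrite !cc_le by (auto; lia). destruct Hc as [[_ Hb] _]. apply Hb. lia.
Qed.

Lemma cc_straight c a k : closed_path adj (2*n) c -> straight_circuit adj opp (2*n) c ->
  straight_path adj opp k (fun j => cc c (a + j)).
Proof.
  intros Hc Hs.
  assert (Hp : is_path adj k (fun j => cc c (a + j))).
  { split.
    - intros i Hi. replace (a + S i) with (S (a+i)) by lia. apply cc_adj; auto.
    - intros i Hi. replace (a + (i+2)) with (a+i+2) by lia. apply cc_nb; auto. }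
  split; auto. apply Hs. split; auto. split.
  - intros j Hj. exists ((a+j) mod (2*n)). pose proof (mod_lt (a+j)). split; [lia|auto].
  - intros j Hj. exists ((a+j) mod (2*n)). split; [apply mod_lt|]. left. split; [auto|].
    replace (a + S j) with (S (a+j)) by lia. apply cc_S. auto.
Qed.

Lemma cc_simple c i j : closed_path adj (2*n) c -> straight_circuit adj opp (2*n) c ->
  cc c i = cc c j -> i mod (2*n) = j mod (2*n).
Proof.
  intros Hc Hs E. rewrite <- (cc_mod c i), <- (cc_mod c j) in E.
  pose proof (mod_lt i). pose proof (mod_lt j).
  set (i' := i mod (2*n)) in *. set (j' := j mod (2*n)) in *. clearbody i' j'.
  assert (G : forall a b, a < b -> b < 2*n -> cc c a = cc c b -> False).
  { intros a b Hab Hb2 Eab.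
    destruct (Nat.le_gt_cases (b - a) n) as [Hd|Hd].
    - apply (no_short_loop (b-a) (fun t => cc c (a + t))); [lia|apply cc_straight; auto|].
      cbv beta. rewrite Nat.add_0_r. rewrite Eab. f_equal. lia.
    - apply (no_short_loop (2*n - (b-a)) (fun t => cc c (b + t))); [lia|apply cc_straight; auto|].
      cbv beta. rewrite Nat.add_0_r. replace (b + (2*n - (b-a))) with (a + 2*n) by lia.
      rewrite cc_per. auto. }
  destruct (Nat.lt_total i' j') as [L|[L|L]]; auto.
  - exfalso. eapply G; eauto.
  - exfalso. eapply G; eauto.
Qed.

Lemma track (c y : nat -> V) t0 : closed_path adj (2*n) c -> straight_circuit adj opp (2*n) c ->
  is_path adj (n+1) y -> lies_in (2*n) c (n+1) y -> t0 < 2*n ->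
  y 0 = c t0 -> y 1 = c (S t0) -> forall j, j <= n+1 -> y j = cc c (t0 + j).
Proof.
  intros Hc Hs [Ha Hb] [Hv He] Ht E0 E1.
  assert (P : forall j, j + 1 <= n+1 -> y j = cc c (t0+j) /\ y (S j) = cc c (t0 + S j)).
  { induction j as [|j IH]; intros Hj.
    - rewrite Nat.add_0_r, cc_le by (auto; lia). rewrite cc_le by (auto; lia).
      split; auto. rewrite E1. f_equal. lia.
    - destruct (IH ltac:(lia)) as [IH1 IH2]. split; auto.
      destruct (He (S j) ltac:(lia)) as [s [Hs2 [[F1 F2]|[F1 F2]]]].
      + rewrite F2. rewrite <- cc_le with (c:=c) by (auto; lia).
        rewrite <- cc_le with (c:=c) in F1 by (auto; lia).
        rewrite IH2 in F1. apply cc_simple in F1; auto.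
        replace (S s) with (s + 1) by lia. replace (t0 + S (S j)) with (t0 + S j + 1) by lia.
        apply cc_shift. auto.
      + exfalso. apply (Hb j ltac:(lia)).
        replace (j+2) with (S (S j)) by lia. rewrite F2, IH1.
        rewrite <- cc_le with (c:=c) by (auto; lia).
        rewrite <- cc_le with (c:=c) in F1 by (auto; lia).
        rewrite IH2 in F1. apply cc_simple in F1; auto.
        pose proof (cc_shift c _ _ (2*n-1) F1) as G.
        replace (t0 + S j + (2*n-1)) with (t0 + j + 2*n) in G by lia.
        replace (S s + (2*n-1)) with (s + 2*n) in G by lia.
        rewrite !cc_per in G. auto. }
  intros j Hj. destruct j as [|j].
  - apply P. lia.
  - apply P. lia.
Qed.

Lemma keyK_fwd (c y : nat -> V) t0 : closed_path adj (2*n) c -> straight_circuit adj opp (2*n) c ->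
  is_path adj (n+1) y -> lies_in (2*n) c (n+1) y -> t0 < 2*n ->
  y 0 = c t0 -> y 1 = c (S t0) ->
  exists t, (forall j, j <= n+1 -> t j = y j) /\ t (2*n) = y 0 /\
    forall a k, straight_path adj opp k (fun i => t (a + i)).
Proof.
  intros Hc Hs Hp Hl Ht E0 E1.
  pose proof (track c y t0 Hc Hs Hp Hl Ht E0 E1) as T.
  exists (fun i => cc c (t0 + i)). split; [|split].
  - intros j Hj. symmetry. auto.
  - rewrite cc_per. rewrite (T 0 ltac:(lia)). auto.
  - intros a k. eapply straight_ext; [|apply (cc_straight c (t0 + a) k Hc Hs)].
    intros i Hi. cbv beta. f_equal. lia.
Qed.

Lemma keyK (c y : nat -> V) : closed_path adj (2*n) c -> straight_circuit adj opp (2*n) c ->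
  is_path adj (n+1) y -> lies_in (2*n) c (n+1) y ->
  exists t, (forall j, j <= n+1 -> t j = y j) /\ t (2*n) = y 0 /\
    forall a k, straight_path adj opp k (fun i => t (a + i)).
Proof.
  intros Hc Hs Hp Hl.
  destruct Hl as [Hv He]. destruct (He 0 ltac:(lia)) as [s [Hs2 [[F1 F2]|[F1 F2]]]].
  - apply (keyK_fwd c y s); auto. split; auto.
  - apply (keyK_fwd (fun i => c (2*n - i)) y (2*n - S s)); auto.
    + apply rev_closed; auto.
    + apply rev_sc; auto.
    + apply lies_rev. split; auto.
    + lia.
    + rewrite F1. f_equal. lia.
    + rewrite F2. f_equal. lia.
Qed.

Definition Npath (v w a : V) := exists r, straight_path adj opp n r /\ r 0 = v /\ r n = w /\ r (n-1) = a.

Lemma lemS v w q c : straight_path adj opp n q -> q 0 = v -> q n = w -> opp w (q (n-1)) c ->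
  Npath v w c.
Proof.
  intros Hq E0 En Ho.
  set (y := fun i => if Nat.eqb i (n+1) then c else q i).
  assert (Y1 : forall i, i <= n -> y i = q i).
  { intros i Hi. unfold y. destruct (Nat.eqb_spec i (n+1)); [lia|auto]. }
  assert (Y2 : y (n+1) = c). { unfold y. rewrite Nat.eqb_refl. auto. }
  destruct Hq as [[Ha Hb] Hc].
  assert (Hy : straight_path adj opp (n+1) y).
  { split; [split|].
    - intros i Hi. destruct (Nat.eq_dec i n) as [->|Hne].
      + rewrite Y1 by lia. replace (S n) with (n+1) by lia. rewrite Y2, En.
        apply (opp_adj _ _ _ Ho).
      + rewrite !Y1 by lia. apply Ha. lia.
    - intros i Hi. destruct (Nat.eq_dec (i+2) (n+1)) as [E|Hne].
      + rewrite E, Y2, Y1 by lia. replace i with (n-1) by lia. intro F. rewrite F in Ho.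
        apply (opp_irr _ _ Ho).
      + rewrite !Y1 by lia. apply Hb. lia.
    - intros i Hi. destruct (Nat.eq_dec (i+2) (n+1)) as [E|Hne].
      + rewrite E, Y2, !Y1 by lia. replace i with (n-1) by lia. replace (S (n-1)) with n by lia.
        rewrite En. auto.
      + rewrite !Y1 by lia. apply Hc. lia. }
  destruct (HVP3 y Hy) as [C [HC [HS HL]]].
  destruct (keyK C y HC HS (proj1 Hy) HL) as [t [T1 [T2 T3]]].
  exists (fun i => t (n + (n - i))). split; [|split; [|split]].
  - pose proof (straight_rev n _ (T3 n n)) as R. cbv beta in R. exact R.
  - cbv beta. rewrite Nat.sub_0_r. replace (n+n) with (2*n) by lia. rewrite T2, Y1 by lia. auto.
  - cbv beta. rewrite Nat.sub_diag, Nat.add_0_r, T1, Y1 by lia. auto.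
  - cbv beta. replace (n + (n - (n-1))) with (n+1) by lia. rewrite T1 by lia. auto.
Qed.

Lemma lemM v w a b : trivial_opp (nbhd adj v) (opp v) -> Npath v w a -> Npath v w b -> a <> b ->
  opp w a b.
Proof.
  intros Htv [r [Hr [R0 [Rn Ra]]]] [s [Hs [S0 [Sn Sb]]]] Hab.
  assert (D : r 1 <> s 1).
  { intro E.
    pose proof (straight_shift n 1 r ltac:(lia) Hr) as X.
    pose proof (straight_shift n 1 s ltac:(lia) Hs) as Y.
    destruct (HVP2 (n-1) ltac:(lia) _ X (n-1) _ ltac:(lia) Y) as [_ Heq].
    - cbv beta. rewrite !Nat.add_0_r. auto.
    - cbv beta. replace (1 + (n-1)) with n by lia. rewrite Sn, Rn. auto.
    - specialize (Heq (n-2) ltac:(lia)). cbv beta in Heq.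
      replace (1 + (n-2)) with (n-1) in Heq by lia. apply Hab. rewrite <- Ra, <- Sb. auto. }
  set (y := fun i => match i with 0 => s 1 | S j => r j end).
  destruct Hr as [[Ha Hb] Hc]. destruct Hs as [[Sa Sb'] Sc].
  assert (Hy : straight_path adj opp (n+1) y).
  { split; [split|].
    - intros [|i] Hi; simpl.
      + rewrite R0, <- S0. apply Hsym. apply Sa. lia.
      + apply Ha. lia.
    - intros [|i] Hi; simpl.
      + intro F. apply D. auto.
      + replace (S (S i)) with (i+2) by lia. apply (Hb i). lia.
    - intros [|i] Hi; simpl.
      + rewrite R0. apply Htv; unfold nbhd; auto.
        * rewrite <- S0. apply Sa. lia.
        * rewrite <- R0. apply Ha. lia.
      + replace (S (S i)) with (i+2) by lia. apply (Hc i). lia. }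
  destruct (HVP3 y Hy) as [C [HC [HS HL]]].
  destruct (keyK C y HC HS (proj1 Hy) HL) as [t [T1 [T2 T3]]].
  pose proof (straight_rev (n-1) _ (straight_shift n 1 s ltac:(lia) (conj (conj Sa Sb') Sc))) as X.
  cbv beta in X.
  destruct (HVP2 (n-1) ltac:(lia) _ X (n-1) _ ltac:(lia) (T3 (n+1) (n-1))) as [_ Heq].
  - cbv beta. rewrite Nat.add_0_r, T1 by lia. replace (n+1) with (S n) by lia. simpl.
    rewrite Rn, <- Sn. f_equal. lia.
  - cbv beta. replace (n+1+(n-1)) with (2*n) by lia. rewrite T2. simpl. f_equal. lia.
  - specialize (Heq 1 ltac:(lia)). cbv beta in Heq.
    replace (1 + (n-1-1)) with (n-1) in Heq by lia. rewrite Sb in Heq.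
    destruct (T3 n 2) as [_ Hst]. specialize (Hst 0 ltac:(lia)). cbv beta in Hst.
    rewrite Nat.add_0_r in Hst. replace (n+(0+2)) with (n+1+1) in Hst by lia.
    rewrite Heq in Hst. rewrite !T1 in Hst by lia.
    replace (n+1) with (S n) in Hst by lia. replace n with (S (n-1)) in Hst at 2 by lia.
    simpl in Hst. replace (S (n-1)) with n in Hst by lia. rewrite Rn, Ra in Hst. auto.
Qed.

Lemma lemT v w p : trivial_opp (nbhd adj v) (opp v) -> straight_path adj opp n p ->
  p 0 = v -> p n = w -> trivial_opp (nbhd adj w) (opp w).
Proof.
  intros Htv Hp P0 Pn.
  assert (Hpn : adj w (p (n-1))).
  { rewrite <- Pn. apply Hsym. destruct Hp as [[Ha _] _]. pose proof (Ha (n-1) ltac:(lia)) as H. replace (S (n-1)) with n in H by lia. exact H. }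

  assert (NA : forall a, adj w a -> Npath v w a).
  { intros a Ha. destruct (Hplump w [a; p (n-1)]) as [c [Hc1 Hc2]].
    - intros x [<-|[<-|[]]]; unfold nbhd; auto.
    - simpl; lia.
    - assert (O1 : opp w c a) by (apply Hc2; simpl; auto).
      assert (O2 : opp w c (p (n-1))) by (apply Hc2; simpl; auto).
      destruct (lemS v w p c Hp P0 Pn (opp_sym _ _ _ O2)) as [r [Hr [R0 [Rn Rc]]]].
      apply (lemS v w r a Hr R0 Rn). rewrite Rc. auto. }
  intros a b Ha Hb Hab. apply (lemM v w a b Htv); auto.
Qed.

Definition Oppo v w := exists p, straight_path adj opp n p /\ p 0 = v /\ p n = w.

Lemma extend_straight (v u : V) : adj v u -> forall k, k >= 1 ->
  exists p, straight_path adj opp k p /\ p 0 = v /\ p 1 = u.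
Proof.
  intros Hvu k Hk. induction k as [|k IH]; [lia|].
  destruct (Nat.eq_dec k 0) as [->|Hk0].
  - exists (fun i => if Nat.eqb i 0 then v else u). split; [split; [split|]|split]; auto.
    + intros i Hi. assert (i = 0) by lia. subst. simpl. auto.
    + intros i Hi; lia.
    + intros i Hi; lia.
  - destruct (IH ltac:(lia)) as [p [[[Ha Hb] Hc] [P0 P1]]].
    destruct (Hplump (p k) [p (k-1)]) as [z [Hz1 Hz2]].
    + intros x [<-|[]]. unfold nbhd. apply Hsym. pose proof (Ha (k-1) ltac:(lia)) as H. replace (S (k-1)) with k in H by lia. exact H.
    + simpl; lia.
    + assert (O : opp (p k) z (p (k-1))) by (apply Hz2; simpl; auto).
      exists (fun i => if Nat.eqb i (S k) then z else p i).
      assert (Y1 : forall i, i <= k -> (if Nat.eqb i (S k) then z else p i) = p i).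
      { intros i Hi. destruct (Nat.eqb_spec i (S k)); [lia|auto]. }
      split; [split; [split|]|split].
      * intros i Hi. destruct (Nat.eq_dec i k) as [->|Hne].
        -- rewrite Nat.eqb_refl, Y1 by lia. apply (opp_adj _ _ _ O).
        -- rewrite !Y1 by lia. apply Ha. lia.
      * intros i Hi. destruct (Nat.eq_dec (i+2) (S k)) as [E|Hne].
        -- rewrite E, Nat.eqb_refl, Y1 by lia. replace i with (k-1) by lia. intro F.
           rewrite F in O. apply (opp_irr _ _ O).
        -- rewrite !Y1 by lia. apply Hb. lia.
      * intros i Hi. destruct (Nat.eq_dec (i+2) (S k)) as [E|Hne].
        -- rewrite E, Nat.eqb_refl, !Y1 by lia. replace i with (k-1) by lia.
           replace (S (k-1)) with k by lia. apply opp_sym. auto.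
        -- rewrite !Y1 by lia. apply Hc. lia.
      * rewrite Y1 by lia. auto.
      * rewrite Y1 by lia. auto.
Qed.

Lemma step2 v u w : trivial_opp (nbhd adj v) (opp v) -> adj v u -> adj u w ->
  trivial_opp (nbhd adj w) (opp w).
Proof.
  intros Htv Hvu Huw.
  destruct (Hplump u [v; w]) as [x [Hx1 Hx2]].
  - intros y [<-|[<-|[]]]; unfold nbhd; auto.
  - simpl; lia.
  - assert (O1 : opp u x v) by (apply Hx2; simpl; auto).
    assert (O2 : opp u x w) by (apply Hx2; simpl; auto).
    unfold nbhd in Hx1.
    destruct (extend_straight u x Hx1 (n-1) ltac:(lia)) as [p [[[Ha Hb] Hc] [P0 P1]]].
    set (q := fun (z : V) i => match i with 0 => z | S j => p j end).
    assert (Q : forall z, adj z u -> opp u x z -> straight_path adj opp n (q z)).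
    { intros z Hz Oz. split; [split|].
      - intros [|i] Hi; simpl; [rewrite P0; auto|apply Ha; lia].
      - intros [|i] Hi; simpl.
        + rewrite P1. intro F. rewrite F in Oz. apply (opp_irr _ _ Oz).
        + replace (S (S i)) with (i+2) by lia. apply Hb. lia.
      - intros [|i] Hi; simpl.
        + rewrite P0, P1. apply opp_sym. auto.
        + replace (S (S i)) with (i+2) by lia. apply Hc. lia. }
    pose proof (Q v Hvu O1) as Qv.
    pose proof (Q w (Hsym _ _ Huw) O2) as Qw.
    assert (Tz : trivial_opp (nbhd adj (q v n)) (opp (q v n))) by (apply (lemT v _ (q v)); auto).
    pose proof (straight_rev n _ Qw) as Rw.
    apply (lemT (q v n) w (fun i => q w (n - i))); auto.
    + cbv beta. rewrite Nat.sub_0_r. replace n with (S (n-1)) by lia. simpl. auto.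
    + cbv beta. rewrite Nat.sub_diag. auto.
Qed.

Lemma even_walk v : trivial_opp (nbhd adj v) (opp v) -> forall m wk,
  wk 0 = v -> walk adj (2*m) wk -> trivial_opp (nbhd adj (wk (2*m))) (opp (wk (2*m))).
Proof.
  intros Htv m. induction m as [|m IH]; intros wk W0 Hw.
  - simpl. rewrite W0. auto.
  - apply (step2 (wk (2*m)) (wk (S (2*m)))).
    + apply IH; auto. intros i Hi. apply Hw. lia.
    + apply Hw. lia.
    + replace (2 * S m) with (S (S (2*m))) by lia. apply Hw. lia.
Qed.

End Main.

Theorem proposition2p17 (V : Type) (adj : V -> V -> Prop)
  (opp : V -> V -> V -> Prop) (n : nat) :
  2 <= n -> veldkamp_ngon adj opp n ->
  forall v : V, trivial_opp (nbhd adj v) (opp v) ->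
  (forall w d, is_dist adj v w d -> Nat.Even d -> trivial_opp (nbhd adj w) (opp w)) /\
  (Nat.Odd n -> forall w, trivial_opp (nbhd adj w) (opp w)).
Proof.
  intros Hn [_ [[[Hsym Hirr] Hloc] [[Hcon _] [H2 H3]]]] v Htv.
  assert (Hopp : forall v, opposition_on (nbhd adj v) (opp v)) by (intro x; apply Hloc).
  assert (Hpl : forall v, plump 2 (nbhd adj v) (opp v)) by (intro x; apply Hloc).
  split.
  - intros w d [[wk [W0 [Wd Hw]]] _] [m ->].
    rewrite <- Wd. apply (even_walk V adj opp n Hn Hsym Hopp Hpl H2 H3 v Htv m wk W0 Hw).
  - intros Hodd w. destruct (Hcon v w) as [k [wk [W0 [Wk Hw]]]].
    destruct (Nat.Even_or_Odd k) as [[m ->]|[m Ek]].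
    + rewrite <- Wk. apply (even_walk V adj opp n Hn Hsym Hopp Hpl H2 H3 v Htv m wk W0 Hw).
    + destruct (Hpl v []) as [u [Hu _]]; [intros x []|simpl; lia|].
      destruct (extend_straight V adj opp n Hn Hsym Hopp Hpl v u Hu n ltac:(lia)) as [p [Hp [P0 P1]]].
      assert (Tz := lemT V adj opp n Hn Hsym Hopp Hpl H2 H3 v (p n) p Htv Hp P0 eq_refl).
      destruct Hodd as [l El].
      set (ww := fun i => if Nat.leb i n then p (n - i) else wk (i - n)).
      assert (Hww : walk adj (2 * (l + m + 1)) ww).
      { intros i Hi. unfold ww. destruct Hp as [[Ha _] _].
        destruct (Nat.leb_spec i n); destruct (Nat.leb_spec (S i) n).
        - apply Hsym. replace (n - i) with (S (n - S i)) by lia. apply Ha. lia.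
        - assert (i = n) by lia. subst i. rewrite Nat.sub_diag. replace (S n - n) with 1 by lia.
          rewrite P0, <- W0. apply Hw. lia.
        - lia.
        - replace (S i - n) with (S (i - n)) by lia. apply Hw. lia. }
      pose proof (even_walk V adj opp n Hn Hsym Hopp Hpl H2 H3 (p n) Tz (l+m+1) ww) as G.
      assert (E0 : ww 0 = p n) by (unfold ww; simpl; rewrite Nat.sub_0_r; auto).
      assert (E1 : ww (2 * (l+m+1)) = w).
      { unfold ww. destruct (Nat.leb_spec (2 * (l+m+1)) n); [lia|].
        replace (2 * (l + m + 1) - n) with k by lia. auto. }
      rewrite <- E1. apply G; auto.
Qed.
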